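(* Let $\mathcal T$ be an orbital category. The monotone map $c:\mathrm{wIndSys}_{\mathcal T}\to\mathrm{Fam}_{\mathcal T}$ has a fully faithful left adjoint $\mathcal F\mapsto\underline{\mathbb F}^{triv}_{\mathcal F}$ and a fully faithful right adjoint $\mathcal F\mapsto\underline{\mathbb F}_{\mathcal F}$.
   Context: For a small category $\mathcal T$, $\mathbb F_{\mathcal T}$ is the full subcategory of $\mathrm{Fun}(\mathcal T^{op},\mathrm{Set})$ on finite coproducts of representables; $\mathcal T$ is orbital if $\mathbb F_{\mathcal T}$ has pullbacks. $\mathbb F_V:=\mathbb F_{\mathcal T,/V}$, $*_V$ terminal; for $U\to V$, $\mathrm{Res}^V_U$ is pullback and $\mathrm{Ind}^V_U$ postcomposition. A full $\mathcal T$-subcategory $\mathcal C$ assigns isomorphism-closed classes $\mathcal C_V\subseteq\mathrm{Ob}\,\mathbb F_V$ stable under restriction. For $S\in\mathbb F_V$ with orbits $U$ and $T_U\in\mathbb F_U$, $\coprod_U^ST_U:=\coprod_U\mathrm{Ind}_U^VT_U$. A $\mathcal T$-weak indexing system is a full $\mathcal T$-subcategory with $\mathcal C_V\neq\emptyset\Rightarrow *_V\in\mathcal C_V$ and closed under $\coprod^S_UT_U$ for $S\in\mathcal C_V$, $T_U\in\mathcal C_U$; $\mathrm{wIndSys}_{\mathcal T}$ is their poset under inclusion. A $\mathcal T$-family is a full subcategory $\mathcal F$ with $V\to W$, $W\in\mathcal F$ $\Rightarrow V\in\mathcal F$; $\mathrm{Fam}_{\mathcal T}$ is their poset. $c(\mathcal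 C)=\{V\mid *_V\in\mathcal C_V\}$. For a family $\mathcal F$: $\underline{\mathbb F}^{triv}_{\mathcal F}$ has $V$-value $\{*_V\}$ (up to isomorphism) for $V\in\mathcal F$ and $\emptyset$ otherwise; $\underline{\mathbb F}_{\mathcal F}$ has $V$-value all of $\mathbb F_V$ for $V\in\mathcal F$ and $\emptyset$ otherwise. A monotone map $L$ is left adjoint to $\pi$ if $L(x)\le y\iff x\le\pi(y)$; it is fully faithful if it reflects the order. *)

(* Defs.v *)
From mathcomp Require Import all_boot.
Set Implicit Arguments.
Unset Strict Implicit.
Unset Printing Implicit Defensive.

Record Cat := {
  Ob : Type;
  Hom : Ob -> Ob -> Type;
  idm : forall a, Hom a a;
  cmp : forall x y z, Hom y z -> Hom x y -> Hom x z;
  cmp_id_l : forall a b (f : Hom a b), cmp (idm b) f = f;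
  cmp_id_r : forall a b (f : Hom a b), cmp f (idm a) = f;
  cmp_assoc : forall a b c d (f : Hom a b) (g : Hom b c) (h : Hom c d),
      cmp h (cmp g f) = cmp (cmp h g) f
}.
Arguments idm {_ _}.
Arguments cmp {_ _ _ _}.

Section FT.
Variable T : Cat.

(** An object  coprod_{i in I} y(U_i)  (I finite) is a finite family of objects.
    By the Yoneda lemma (representables are connected), a map
    coprod_i y(U_i) -> coprod_j y(W_j) is a choice, for each i, of an index j
    and a morphism U_i -> W_j of T. *)
Record FinT := { idx : finType; fobj : idx -> Ob T }.
Arguments fobj : clear implicits.

Definition FHom (S R : FinT) : Type :=
  forall i : idx S, { j : idx R & Hom (fobj S i) (fobj R j) }.

Definition FHom_eq (S R : FinT) (f g : FHom S R) : Prop := forall i, f i = g i.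

Definition fid (S : FinT) : FHom S S := fun i => existT _ i idm.
Arguments fid : clear implicits.

Definition fcomp (S R Q : FinT) (g : FHom R Q) (f : FHom S R) : FHom S Q :=
  fun i => existT _ (projT1 (g (projT1 (f i))))
                    (cmp (projT2 (g (projT1 (f i)))) (projT2 (f i))).

Definition single (V : Ob T) : FinT := {| idx := unit; fobj := fun _ => V |}.

Definition fsingle (U V : Ob T) (u : Hom U V) : FHom (single U) (single V) :=
  fun _ => existT (fun j : unit => Hom U V) tt u.

Definition is_pullback (X Y Z P : FinT) (f : FHom X Z) (g : FHom Y Z)
    (p1 : FHom P X) (p2 : FHom P Y) : Prop :=
  FHom_eq (fcomp f p1) (fcomp g p2) /\
  forall (Q : FinT) (q1 : FHom Q X) (q2 : FHom Q Y),
    FHom_eq (fcomp f q1) (fcomp g q2) ->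
    (exists h : FHom Q P, FHom_eq (fcomp p1 h) q1 /\ FHom_eq (fcomp p2 h) q2) /\
    (forall h h' : FHom Q P,
        FHom_eq (fcomp p1 h) q1 -> FHom_eq (fcomp p2 h) q2 ->
        FHom_eq (fcomp p1 h') q1 -> FHom_eq (fcomp p2 h') q2 ->
        FHom_eq h h').

Definition orbital : Prop :=
  forall (X Y Z : FinT) (f : FHom X Z) (g : FHom Y Z),
    exists (P : FinT) (p1 : FHom P X) (p2 : FHom P Y), is_pullback f g p1 p2.

Record SObj (V : Ob T) := { sbase : FinT; sstr : FHom sbase (single V) }.
Arguments sstr {V} s _.

Definition star (V : Ob T) : SObj V := {| sbase := single V; sstr := fid (single V) |}.

Definition slice_iso (V : Ob T) (A B : SObj V) : Prop :=
  exists (f : FHom (sbase A) (sbase B)) (g : FHom (sbase B) (sbase A)),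
    FHom_eq (fcomp g f) (fid _) /\ FHom_eq (fcomp f g) (fid _) /\
    FHom_eq (fcomp (sstr B) f) (sstr A).

Definition orbit_map (V : Ob T) (S : SObj V) (i : idx (sbase S)) :
  Hom (fobj (sbase S) i) V := projT2 (sstr S i).
Arguments orbit_map {V} S i.

(** coprod^S_U T_U := coprod_U Ind^V_U T_U *)
Definition indcoprod (V : Ob T) (S : SObj V)
    (R : forall i : idx (sbase S), SObj (fobj (sbase S) i)) : SObj V :=
  {| sbase := {| idx := {i : idx (sbase S) & idx (sbase (R i))};
                 fobj := fun p => fobj (sbase (R (tag p))) (tagged p) |};
     sstr := fun p => existT (fun _ : unit => _) tt
                (cmp (orbit_map S (tag p)) (orbit_map (R (tag p)) (tagged p))) |}.

Definition TSub := forall V : Ob T, SObj V -> Prop.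

Definition full_Tsubcat (C : TSub) : Prop :=
  (forall V (A B : SObj V), slice_iso A B -> C V A -> C V B) /\
  (* stable under restriction Res^V_U (pullback along U -> V) *)
  (forall U V (u : Hom U V) (S : SObj V) (P : FinT)
          (p1 : FHom P (sbase S)) (p2 : FHom P (single U)),
      is_pullback (sstr S) (fsingle u) p1 p2 ->
      C V S -> C U {| sbase := P; sstr := p2 |}).

Definition wIndSys (C : TSub) : Prop :=
  full_Tsubcat C /\
  (forall V (S : SObj V), C V S -> C V (star V)) /\
  (forall V (S : SObj V) (R : forall i : idx (sbase S), SObj (fobj (sbase S) i)),
      C V S -> (forall i, C _ (R i)) -> C V (indcoprod R)).

Definition Family (F : Ob T -> Prop) : Prop :=
  forall V W (f : Hom V W), F W -> F V.

Definition subC (C C' : TSub) : Prop := forall V (S : SObj V), C V S -> C' V S.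
Definition subF (F F' : Ob T -> Prop) : Prop := forall V, F V -> F' V.

Definition cmap (C : TSub) : Ob T -> Prop := fun V => C V (star V).

Definition Ftriv (F : Ob T -> Prop) : TSub :=
  fun V S => F V /\ slice_iso S (star V).
Definition Ffull (F : Ob T -> Prop) : TSub := fun V _ => F V.

End FT.

(* Main.v *)
Require Import Defs.
From mathcomp Require Import all_boot.
From Stdlib Require Import Eqdep.

Set Implicit Arguments.
Unset Strict Implicit.
Section S.
Variable T : Cat.

Definition IsoStar (V : Ob T) (S : SObj V) :=
  exists (i0 : idx (sbase S)) (a : Hom V (fobj i0)), (forall i, i = i0) /\
    cmp (orbit_map (S:=S) i0) a = idm /\ cmp a (orbit_map (S:=S) i0) = idm.

Lemma sigU (X : Type) (s : {j : unit & X}) : s = existT (fun _ => X) tt (projT2 s).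
Proof. by case: s => [[] x]. Qed.

Lemma eqU (X : Type) (a b : unit) (x y : X) :
  existT (fun _ => X) a x = existT (fun _ => X) b y -> x = y.
Proof. exact: (f_equal (@projT2 _ (fun _ => X))). Qed.

Lemma eq1 (I : Type) (P : I -> Type) i j (x : P i) (y : P j) :
  existT P i x = existT P j y -> i = j.
Proof. exact: (f_equal (@projT1 _ _)). Qed.

Lemma iso_star_of (V : Ob T) (S : SObj V) : slice_iso S (star V) -> IsoStar S.
Proof.
case=> f [g [Hgf [Hfg Hs]]].
case Eg: (g tt) => [i0 a]. exists i0, a.
have Hf: forall i, f i = existT _ tt (orbit_map (S:=S) i).
  move=> i; have := Hs i; rewrite /fcomp /fid /= cmp_id_l /orbit_map.
  case: (f i) => [[] x] /= ->. by case: (sstr (s:=S) i) => [[] y].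
split; [|split].
- move=> i. have := Hgf i. rewrite /fcomp /fid Hf /= Eg /=.
  move=> H; exact: (esym (eq1 H)).
- have := Hfg tt. rewrite /fcomp /fid Eg /= Hf /=. move=> H; exact: (eqU H).
- have := Hgf i0. rewrite /fcomp /fid Hf /= Eg /=. move=> H; exact: (inj_pair2 _ _ _ _ _ H).
Qed.

Lemma star_iso_of (V : Ob T) (S : SObj V) : IsoStar S -> slice_iso S (star V) /\ slice_iso (star V) S.
Proof.
case=> i0 [a [Hi [H1 H2]]].
have Hs: forall i, sstr (s:=S) i = existT _ tt (orbit_map (S:=S) i).
  by move=> i; rewrite /orbit_map; case: (sstr (s:=S) i) => [[] y].
split.
- exists (sstr (s:=S)), (fun _ => existT _ i0 a). split; [|split].
  + move=> i. rewrite /fcomp /fid Hs /=. by have := Hi i => ->; rewrite H2.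
  + move=> [] . by rewrite /fcomp /fid Hs /= H1.
  + move=> i. rewrite /fcomp /fid /= cmp_id_l. by case: (sstr (s:=S) i) => [[] y].
- exists (fun _ => existT _ i0 a), (sstr (s:=S)). split; [|split].
  + move=> [] . by rewrite /fcomp /fid Hs /= H1.
  + move=> i. rewrite /fcomp /fid Hs /=. by have := Hi i => ->; rewrite H2.
  + move=> [] . by rewrite /fcomp /fid Hs /= H1.
Qed.

Lemma sstrE (V : Ob T) (S : SObj V) i : sstr (s:=S) i = existT _ tt (orbit_map (S:=S) i).
Proof. by rewrite /orbit_map; case: (sstr (s:=S) i) => [[] y]. Qed.

Lemma iso_star_res (U V : Ob T) (u : Hom U V) (S : SObj V) (P : FinT T)
  (p1 : FHom P (sbase S)) (p2 : FHom P (single U)) :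
  is_pullback (sstr (s:=S)) (fsingle u) p1 p2 -> IsoStar S ->
  IsoStar {| sbase := P; sstr := p2 |}.
Proof.
move=> [Hsq Hun] [i0 [a [Hi [H1 H2]]]].
pose q1 : FHom (single U) (sbase S) := fun _ => existT _ i0 (cmp a u).
have Hq: FHom_eq (fcomp (sstr (s:=S)) q1) (fcomp (fsingle u) (fid (S:=single U))).
  move=> []; rewrite /fcomp /fid /fsingle sstrE /=.
  by rewrite cmp_assoc H1 cmp_id_l cmp_id_r.
case: (Hun _ q1 (fid (S:=single U)) Hq) => [[h [Hh1 Hh2]] _].
case Eh: (h tt) => [k0 b].
have Hb: cmp (projT2 (p2 k0)) b = idm.
  move: (Hh2 tt); rewrite /fcomp /fid Eh /=. move=> H; exact: (eqU H).
have Hu : FHom_eq (fcomp h p2) (fid (S:=P)).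
  apply: ((Hun _ p1 p2 Hsq).2 (fcomp h p2) (fid (S:=P))).
  - move=> k; move: (Hsq k) (Hh1 tt); rewrite /fcomp /=.
    case: (p1 k) => [i x]; case: (p2 k) => [[] y] /=; rewrite Eh /=.
    case: (p1 k0) => [i' z] /=. rewrite sstrE /=.
    move=> E0 H0; have E := eqU E0. have e := eq1 H0. subst i'.
    have E' := inj_pair2 _ _ _ _ _ H0.
    rewrite cmp_assoc E'. have := Hi i => ei; subst i.
    congr existT. by rewrite -cmp_assoc -E cmp_assoc H2 cmp_id_l.
  - move=> k; rewrite /fcomp /=. case: (p2 k) => [[] y] /=; rewrite Eh /=.
    rewrite cmp_assoc Hb cmp_id_l. by case: (p2 k0) => [[] w].
  - move=> k; rewrite /fcomp /fid /= cmp_id_r. by case: (p1 k).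
  - move=> k; rewrite /fcomp /fid /= cmp_id_r. by case: (p2 k).
exists k0, b. split; [|split].
- move=> k. move: (Hu k). rewrite /fcomp /fid /=. case: (p2 k) => [[] y] /=.
  rewrite Eh /=. move=> H; exact: (esym (eq1 H)).
- exact: Hb.
- move: (Hu k0). rewrite /orbit_map /fcomp /fid /=. case: (p2 k0) => [[] y] /=.
  rewrite Eh /=. move=> H; exact: (inj_pair2 _ _ _ _ _ H).
Qed.

Lemma iso_star_iso (V : Ob T) (A B : SObj V) : slice_iso A B -> IsoStar A -> IsoStar B.
Proof.
move=> [f [g [Hgf [Hfg Hs]]]] [i0 [a [Hi [H1 H2]]]].
case Ef: (f i0) => [k0 y].
case Eg: (g k0) => [i1 x].
have e: i1 = i0 by apply Hi. subst i1.
have Hsy: cmp (orbit_map (S:=B) k0) y = orbit_map (S:=A) i0.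
  move: (Hs i0); rewrite /fcomp Ef /= !sstrE /=. move=> H; exact: (eqU H).
have Hyx: cmp y x = idm.
  move: (Hfg k0); rewrite /fcomp /fid Eg /= Ef /=. move=> H; exact: (inj_pair2 _ _ _ _ _ H).
have Hxy: cmp x y = idm.
  move: (Hgf i0); rewrite /fcomp /fid Ef /= Eg /=. move=> H; exact: (inj_pair2 _ _ _ _ _ H).
have HB: orbit_map (S:=B) k0 = cmp (orbit_map (S:=A) i0) x.
  by rewrite -Hsy -cmp_assoc Hyx cmp_id_r.
exists k0, (cmp y a). split; [|split].
- move=> k. move: (Hfg k); rewrite /fcomp /fid. case: (g k) => [i z] /=.
  have := Hi i => ei; subst i. rewrite Ef /=. move=> H; exact: (esym (eq1 H)).
- by rewrite cmp_assoc Hsy H1.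
- rewrite HB cmp_assoc -(cmp_assoc (orbit_map (S:=A) i0) a y) H2 cmp_id_r Hyx //.
Qed.

Lemma iso_star_ind (V : Ob T) (S : SObj V) (R : forall i : idx (sbase S), SObj (fobj i)) :
  IsoStar S -> (forall i, IsoStar (R i)) -> IsoStar (indcoprod R).
Proof.
move=> [i0 [a [Hi [H1 H2]]]] HR. case: (HR i0) => [j0 [b [Hj [K1 K2]]]].
exists (existT _ i0 j0), (cmp b a). split; [|split].
- case=> i j. have := Hi i => ei; subst i. by rewrite (Hj j).
- rewrite /orbit_map /=. rewrite cmp_assoc -(cmp_assoc b _ _).
  rewrite /orbit_map in K1 H1. by rewrite K1 cmp_id_r H1.
- rewrite /orbit_map /=. rewrite cmp_assoc -(cmp_assoc _ a b).
  rewrite /orbit_map in K2 H2. by rewrite H2 cmp_id_r K2.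
Qed.

Lemma pb_id (V W : Ob T) (f : Hom V W) :
  is_pullback (sstr (s:=star W)) (fsingle f) (fsingle f) (fid (S:=single V)).
Proof.
split.
- move=> []; by rewrite /fcomp /fid /fsingle /= cmp_id_l cmp_id_r.
- move=> Q q1 q2 Hq. split.
  + exists q2. split.
    * move=> k. move: (Hq k). rewrite /fcomp /fid /fsingle /=.
      case: (q1 k) => [[] x]; case: (q2 k) => [[] y] /=.
      rewrite cmp_id_l. move=> H; by rewrite (eqU H).
    * move=> k; rewrite /fcomp /fid /= cmp_id_l. by case: (q2 k) => [[] y].
  + move=> h h' _ E _ E' k. move: (E k) (E' k); rewrite /fcomp /fid /= !cmp_id_l.
    case: (h k) => [[] x]; case: (h' k) => [[] y] /=. by move=> -> ->.
Qed.

Lemma istar (V : Ob T) : IsoStar (star V).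
Proof.
exists tt, idm. split; [by case|]. by rewrite /orbit_map /= cmp_id_l.
Qed.
End S.
Unset Implicit Arguments.

Theorem mainTheorem12 (T : Cat) (Horb : orbital T) :
  (* c is a well-defined monotone map wIndSys_T -> Fam_T *)
  (forall C : TSub T, wIndSys C -> Family (cmap C)) /\
  (forall C C' : TSub T, wIndSys C -> wIndSys C' -> subC C C' ->
      subF (cmap C) (cmap C')) /\
  (* F |-> F^triv_F and F |-> F_F are maps Fam_T -> wIndSys_T *)
  (forall F : Ob T -> Prop, Family F -> wIndSys (Ftriv F) /\ wIndSys (Ffull F)) /\
  (* left adjoint *)
  (forall (F : Ob T -> Prop) (C : TSub T), Family F -> wIndSys C ->
      (subC (Ftriv F) C <-> subF F (cmap C))) /\
  (* right adjoint *)
  (forall (F : Ob T -> Prop) (C : TSub T), Family F -> wIndSys C ->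
      (subF (cmap C) F <-> subC C (Ffull F))) /\
  (* both adjoints are fully faithful *)
  (forall F F' : Ob T -> Prop, Family F -> Family F' -> subC (Ftriv F) (Ftriv F') -> subF F F') /\
  (forall F F' : Ob T -> Prop, Family F -> Family F' -> subC (Ffull F) (Ffull F') -> subF F F').
Proof.
split; [|split; [|split; [|split; [|split; [|split]]]]].
- move=> C [[Hiso Hres] [Hstar Hind]] V W f HW.
  exact: (Hres _ _ f _ _ _ _ (pb_id f) HW).
- move=> C C' _ _ H V; exact: H.
- move=> F HF; split.
  + split; [split|split].
    * move=> V A B HAB [HV HA]. split=>//.
      exact: (star_iso_of (iso_star_iso HAB (iso_star_of HA))).1.
    * move=> U V u S P p1 p2 Hpb [HV HS]. split; first exact: HF _ _ u HV.
      exact: (star_iso_of (iso_star_res Hpb (iso_star_of HS))).1.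
    * move=> V S [HV _]. split=>//. exact: (star_iso_of (istar V)).1.
    * move=> V S R [HV HS] HR. split=>//.
      exact: (star_iso_of (iso_star_ind (iso_star_of HS) (fun i => iso_star_of (HR i).2))).1.
  + split; [split|split]; rewrite /Ffull.
    * move=> V A B _ H; exact H.
    * move=> U V u S P p1 p2 _ H; exact: HF _ _ u H.
    * move=> V S H; exact H.
    * move=> V S R H _; exact H.
- move=> F C HF [[Hiso Hres] [Hstar Hind]]; split.
  + move=> H V HV. apply: H. split=>//. exact: (star_iso_of (istar V)).1.
  + move=> H V S [HV HS]. apply: (Hiso _ _ _ (star_iso_of (iso_star_of HS)).2).
    exact: H.
- move=> F C HF [[Hiso Hres] [Hstar Hind]]; split.
  + move=> H V S HS. apply: H. exact: Hstar _ _ HS.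
  + move=> H V HV. exact: (H V (star V) HV).
- move=> F F' _ _ H V HV.
  have := H V (star V) (conj HV (star_iso_of (istar V)).1). by case.
- move=> F F' _ _ H V HV. exact: (H V (star V) HV).
Qed.
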